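(* The group $\mathrm{GL}_n(\mathbb C)\times\mathrm{GL}_n(\mathbb C)$ has $2^{n-1}$ orbits on $\mathrm{Hinge}_n$. These orbits are enumerated by the number $k\in\{1,\dots,n\}$ of terms and the positive integers $\alpha_1=\mathrm{rk}\,P_1,\dots,\alpha_k=\mathrm{rk}\,P_k$, where $\alpha_1+\dots+\alpha_k=n$: two hinges lie in the same orbit iff these data coincide, and every such tuple $(\alpha_1,\dots,\alpha_k)$ occurs.
   Context: Let $V=\mathbb C^n$. For a linear subspace (linear relation) $P\subset V\oplus V$: $\mathrm{Ker}\,P=\{v: v\oplus0\in P\}$, $\mathrm{Dom}\,P$ and $\mathrm{Im}\,P$ are the projections of $P$ to the first and second summands, $\mathrm{Indef}\,P=\{w:0\oplus w\in P\}$, $\mathrm{rk}\,P=\dim\mathrm{Dom}\,P-\dim\mathrm{Ker}\,P$. A hinge is a sequence $(P_1,\dots,P_k)$ of $n$-dimensional subspaces of $V\oplus V$ such that $\mathrm{Ker}\,P_j=\mathrm{Dom}\,P_{j+1}$ and $\mathrm{Im}\,P_j=\mathrm{Indef}\,P_{j+1}$ for $1\le j\le k-1$, $\mathrm{Dom}\,P_1=V$, $\mathrm{Im}\,P_k=V$, and $\mathrm{rk}\,P_j>0$ for all $j$. $\mathrm{Hinge}_n$ is the set of all hinges. $(g_1,g_2)\in\mathrm{GL}_n(\mathbb C)\times\mathrm{GL}_n(\mathbb C)$ acts on $V\oplus V$ by $v\oplus w\mapsto g_1v\oplus g_2w$, and on hinges termwise. *)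

(* Defs.v *)
From mathcomp Require Import all_boot all_algebra complex.
From mathcomp Require Import Rstruct.
Set Implicit Arguments. Unset Strict Implicit. Unset Printing Implicit Defensive.
Import GRing.Theory.
Local Open Scope ring_scope.

Definition C : fieldType := (Rdefinitions.R)[i].

(* V = C^n is represented by row vectors 'rV[C]_n; V (+) V by 'rV[C]_(n+n),
   the first n coordinates being the first summand.  A linear subspace of
   V (+) V is represented (mxalgebra style) as the row space of a square
   matrix P : 'M[C]_(n+n); subspaces are compared with (_ == _)%MS. *)
Notation subsp n := 'M[C]_(n + n).

Definition DomM n (P : subsp n) : 'M[C]_(n + n, n) := lsubmx P.
Definition ImM n (P : subsp n) : 'M[C]_(n + n, n) := rsubmx P.
(* Ker P = {v | v (+) 0 \in P}: the first components of the elements of P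
   whose second component vanishes. *)
Definition KerM n (P : subsp n) : 'M[C]_(n + n, n) :=
  kermx (rsubmx P) *m lsubmx P.
(* Indef P = {w | 0 (+) w \in P}. *)
Definition IndefM n (P : subsp n) : 'M[C]_(n + n, n) :=
  kermx (lsubmx P) *m rsubmx P.

Definition rk n (P : subsp n) : nat := (\rank (DomM P) - \rank (KerM P))%N.

Lemma KerM_spec n (P : subsp n) (v : 'rV[C]_n) :
  (v <= KerM P)%MS = (row_mx v 0 <= P)%MS.
Proof.
apply/idP/idP.
  case/submxP=> u ->; apply/submxP; exists (u *m kermx (rsubmx P)).
  rewrite -{3}(hsubmxK P) mul_mx_row -(mulmxA u (kermx _) (rsubmx P)).
  by rewrite mulmx_ker mulmx0 /KerM mulmxA.
case/submxP=> u Hu; rewrite -{1}(hsubmxK P) mul_mx_row in Hu.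
case/eq_row_mx: Hu => Hl Hr.
have /sub_kermxP : u *m rsubmx P = 0 by rewrite -Hr.
case/submxP=> w Hw; apply/submxP; exists w.
by rewrite Hl Hw /KerM mulmxA.
Qed.

Lemma IndefM_spec n (P : subsp n) (w : 'rV[C]_n) :
  (w <= IndefM P)%MS = (row_mx 0 w <= P)%MS.
Proof.
apply/idP/idP.
  case/submxP=> u ->; apply/submxP; exists (u *m kermx (lsubmx P)).
  rewrite -{3}(hsubmxK P) mul_mx_row -(mulmxA u (kermx _) (lsubmx P)).
  by rewrite mulmx_ker mulmx0 /IndefM mulmxA.
case/submxP=> u Hu; rewrite -{1}(hsubmxK P) mul_mx_row in Hu.
case/eq_row_mx: Hu => Hl Hr.
have /sub_kermxP : u *m lsubmx P = 0 by rewrite -Hl.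
case/submxP=> z Hz; apply/submxP; exists z.
by rewrite Hr Hz /IndefM mulmxA.
Qed.

Lemma DomM_spec n (P : subsp n) (v : 'rV[C]_n) :
  (v <= DomM P)%MS <-> exists w : 'rV[C]_n, (row_mx v w <= P)%MS.
Proof.
split.
  case/submxP=> u ->; exists (u *m rsubmx P); apply/submxP; exists u.
  by rewrite -{3}(hsubmxK P) mul_mx_row.
case=> w /submxP [u Hu]; apply/submxP; exists u.
by rewrite -{1}(hsubmxK P) mul_mx_row in Hu; case/eq_row_mx: Hu.
Qed.

Lemma ImM_spec n (P : subsp n) (w : 'rV[C]_n) :
  (w <= ImM P)%MS <-> exists v : 'rV[C]_n, (row_mx v w <= P)%MS.
Proof.
split.
  case/submxP=> u ->; exists (u *m lsubmx P); apply/submxP; exists u.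
  by rewrite -{3}(hsubmxK P) mul_mx_row.
case=> v /submxP [u Hu]; apply/submxP; exists u.
by rewrite -{1}(hsubmxK P) mul_mx_row in Hu; case/eq_row_mx: Hu.
Qed.

Definition is_hinge n (s : seq (subsp n)) : Prop :=
  [/\ s != [::],
      (forall P, P \in s -> \rank P = n /\ (0 < rk P)%N),
      (forall j, (j.+1 < size s)%N ->
          (KerM (nth 0 s j) == DomM (nth 0 s j.+1))%MS /\
          (ImM (nth 0 s j) == IndefM (nth 0 s j.+1))%MS),
      row_full (DomM (head 0 s)) &
      row_full (ImM (last 0 s))].

(* Action of (g1, g2) on V (+) V: v (+) w |-> v g1 (+) w g2 (row vectors, so
   the matrices act on the right), and on subspaces by the image. *)
Definition act n (g1 g2 : 'M[C]_n) (P : subsp n) : subsp n :=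
  P *m block_mx g1 0 0 g2.

Definition same_orbit n (H1 H2 : seq (subsp n)) : Prop :=
  exists g1 g2 : 'M[C]_n,
    [/\ g1 \in unitmx, g2 \in unitmx, size H1 = size H2 &
        forall j, (j < size H1)%N ->
          (act g1 g2 (nth 0 H1 j) == nth 0 H2 j)%MS].

(* Main.v *)
Require Import Defs.
From mathcomp Require Import all_boot all_algebra.
From mathcomp Require Import zify.
Set Implicit Arguments. Unset Strict Implicit. Unset Printing Implicit Defensive.
Import GRing.Theory.
Local Open Scope ring_scope.

Section Basic.
Variable n : nat.
Implicit Types P Q : subsp n.

Lemma eqmx_vec m1 m2 (A : 'M[C]_(m1, n)) (B : 'M[C]_(m2, n)) :
  (forall v : 'rV[C]_n, (v <= A)%MS = (v <= B)%MS) -> (A == B)%MS.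
Proof.
move=> H; apply/andP; split; apply/row_subP => i.
  by rewrite -H row_sub.
by rewrite H row_sub.
Qed.

Lemma sub_vec m1 m2 (A : 'M[C]_(m1, n)) (B : 'M[C]_(m2, n)) :
  (forall v : 'rV[C]_n, (v <= A)%MS -> (v <= B)%MS) -> (A <= B)%MS.
Proof. by move=> H; apply/row_subP => i; apply: H; rewrite row_sub. Qed.

Lemma DomM_eq P Q : (P == Q)%MS -> (DomM P == DomM Q)%MS.
Proof.
move/eqmxP=> e; apply: eqmx_vec => v; apply/idP/idP.
  by move/DomM_spec=> [w Hw]; apply/DomM_spec; exists w; rewrite -e.
by move/DomM_spec=> [w Hw]; apply/DomM_spec; exists w; rewrite e.
Qed.

Lemma ImM_eq P Q : (P == Q)%MS -> (ImM P == ImM Q)%MS.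
Proof.
move/eqmxP=> e; apply: eqmx_vec => v; apply/idP/idP.
  by move/ImM_spec=> [w Hw]; apply/ImM_spec; exists w; rewrite -e.
by move/ImM_spec=> [w Hw]; apply/ImM_spec; exists w; rewrite e.
Qed.

Lemma KerM_eq P Q : (P == Q)%MS -> (KerM P == KerM Q)%MS.
Proof. by move/eqmxP=> e; apply: eqmx_vec => v; rewrite !KerM_spec e. Qed.

Lemma IndefM_eq P Q : (P == Q)%MS -> (IndefM P == IndefM Q)%MS.
Proof. by move/eqmxP=> e; apply: eqmx_vec => v; rewrite !IndefM_spec e. Qed.

Lemma rk_eq P Q : (P == Q)%MS -> rk P = rk Q.
Proof.
by move=> e; rewrite /rk (eqmx_rank (DomM_eq e)) (eqmx_rank (KerM_eq e)).
Qed.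

Definition blk (g1 g2 : 'M[C]_n) : 'M[C]_(n + n) := block_mx g1 0 0 g2.

Lemma blk_unit g1 g2 : g1 \in unitmx -> g2 \in unitmx -> blk g1 g2 \in unitmx.
Proof. by move=> u1 u2; rewrite /blk block_diag_mx_unit u1 u2. Qed.

Lemma row_mx_blk m (x y : 'M[C]_(m, n)) g1 g2 :
  row_mx x y *m blk g1 g2 = row_mx (x *m g1) (y *m g2).
Proof. by rewrite /blk mul_row_block !mulmx0 addr0 add0r. Qed.

Lemma DomM_act g1 g2 P : DomM (act g1 g2 P) = DomM P *m g1.
Proof.
by rewrite /DomM /act -{1}(hsubmxK P) -/(blk g1 g2) row_mx_blk row_mxKl.
Qed.

Lemma ImM_act g1 g2 P : ImM (act g1 g2 P) = ImM P *m g2.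
Proof.
by rewrite /ImM /act -{1}(hsubmxK P) -/(blk g1 g2) row_mx_blk row_mxKr.
Qed.

Lemma sub_mul_unit m1 m2 (u : 'M[C]_(m1, n)) (A : 'M[C]_(m2, n)) g :
  g \in unitmx -> (u <= A *m g)%MS = (u *m invmx g <= A)%MS.
Proof.
move=> ug; rewrite -{1}(mulmxKV ug u) submxMfree //.
by rewrite row_free_unit.
Qed.

Lemma KerM_act g1 g2 P : g1 \in unitmx -> g2 \in unitmx ->
  (KerM (act g1 g2 P) == KerM P *m g1)%MS.
Proof.
move=> u1 u2; apply: eqmx_vec => v.
rewrite KerM_spec sub_mul_unit // KerM_spec /act -/(blk g1 g2).
have bf : row_free (blk g1 g2) by rewrite row_free_unit blk_unit.
by rewrite -(submxMfree (row_mx (v *m invmx g1) 0) _ bf) row_mx_blk mul0mx mulmxKV.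
Qed.

Lemma IndefM_act g1 g2 P : g1 \in unitmx -> g2 \in unitmx ->
  (IndefM (act g1 g2 P) == IndefM P *m g2)%MS.
Proof.
move=> u1 u2; apply: eqmx_vec => v.
rewrite IndefM_spec sub_mul_unit // IndefM_spec /act -/(blk g1 g2).
have bf : row_free (blk g1 g2) by rewrite row_free_unit blk_unit.
by rewrite -(submxMfree (row_mx 0 (v *m invmx g2)) _ bf) row_mx_blk mul0mx mulmxKV.
Qed.

Lemma rk_act g1 g2 P : g1 \in unitmx -> g2 \in unitmx ->
  rk (act g1 g2 P) = rk P.
Proof.
move=> u1 u2; rewrite /rk DomM_act (eqmx_rank (KerM_act P u1 u2)).
have f1 : row_free g1 by rewrite row_free_unit.
by rewrite !(mxrankMfree _ f1).
Qed.

Lemma rank_act g1 g2 P : g1 \in unitmx -> g2 \in unitmx ->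
  \rank (act g1 g2 P) = \rank P.
Proof. by move=> u1 u2; rewrite /act mxrankMfree ?row_free_unit -?/(blk g1 g2) ?blk_unit. Qed.

Lemma act_comp g1 g2 h1 h2 P :
  act h1 h2 (act g1 g2 P) = act (g1 *m h1) (g2 *m h2) P.
Proof.
by rewrite /act -mulmxA mulmx_block !mulmx0 !mul0mx !addr0 !add0r.
Qed.

Lemma act1 P : act 1%:M 1%:M P = P.
Proof. by rewrite /act -scalar_mx_block mulmx1. Qed.

End Basic.


Section Basic2.
Variable n : nat.
Implicit Types P Q : subsp n.

Lemma KerM_sub P m (X : 'M[C]_(m, n)) :
  (X <= KerM P)%MS = (row_mx X 0 <= P)%MS.
Proof.
apply/idP/idP.
  case/submxP=> u ->; apply/submxP; exists (u *m kermx (rsubmx P)).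
  rewrite -{3}(hsubmxK P) mul_mx_row -(mulmxA u (kermx _) (rsubmx P)).
  by rewrite mulmx_ker mulmx0 /KerM mulmxA.
case/submxP=> u Hu; rewrite -{1}(hsubmxK P) mul_mx_row in Hu.
case/eq_row_mx: Hu => Hl Hr.
have /sub_kermxP : u *m rsubmx P = 0 by rewrite -Hr.
case/submxP=> w Hw; apply/submxP; exists w.
by rewrite Hl Hw /KerM mulmxA.
Qed.

Lemma IndefM_sub P m (X : 'M[C]_(m, n)) :
  (X <= IndefM P)%MS = (row_mx 0 X <= P)%MS.
Proof.
apply/idP/idP.
  case/submxP=> u ->; apply/submxP; exists (u *m kermx (lsubmx P)).
  rewrite -{3}(hsubmxK P) mul_mx_row -(mulmxA u (kermx _) (lsubmx P)).
  by rewrite mulmx_ker mulmx0 /IndefM mulmxA.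
case/submxP=> u Hu; rewrite -{1}(hsubmxK P) mul_mx_row in Hu.
case/eq_row_mx: Hu => Hl Hr.
have /sub_kermxP : u *m lsubmx P = 0 by rewrite -Hl.
case/submxP=> z Hz; apply/submxP; exists z.
by rewrite Hr Hz /IndefM mulmxA.
Qed.

Lemma row_mx_subP P m (X Y : 'M[C]_(m, n)) :
  (row_mx X Y <= P)%MS -> (X <= DomM P)%MS /\ (Y <= ImM P)%MS.
Proof.
case/submxP=> u Hu; rewrite -(hsubmxK P) mul_mx_row in Hu.
by case/eq_row_mx: Hu => -> ->; split; apply: submxMl.
Qed.

Lemma KerM_DomM P : (KerM P <= DomM P)%MS.
Proof.
by have := submx_refl (KerM P); rewrite KerM_sub => /row_mx_subP [-> _].
Qed.

Lemma IndefM_ImM P : (IndefM P <= ImM P)%MS.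
Proof.
have := submx_refl (IndefM P); rewrite IndefM_sub => /row_mx_subP [_ ->] //.
Qed.

Lemma rank_ImKer P : \rank P = (\rank (ImM P) + \rank (KerM P))%N.
Proof.
have e1 : kermx (rsubmx P) *m P = row_mx (KerM P) 0.
  rewrite -[X in _ *m X](hsubmxK P) mul_mx_row mulmx_ker.
  by rewrite /KerM.
have e2 : (kermx P <= kermx (rsubmx P))%MS.
  apply/sub_kermxP; have := mulmx_ker P; rewrite -[X in _ *m X](hsubmxK P) mul_mx_row.
  by move/eqP; rewrite -row_mx0 => /eqP /eq_row_mx [].
have := mxrank_mul_ker (kermx (rsubmx P)) P.
rewrite e1 rank_row_mx0 (eqmx_rank (introT eqmxP (capmx_idPr e2))).
rewrite !mxrank_ker /ImM.
have := rank_leq_row P; have := rank_leq_row (rsubmx P).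
lia.
Qed.

End Basic2.


Section Can.
Variable n : nat.
Local Notation pid a := (pid_mx a : 'M[C]_n).
Local Notation copid a := (copid_mx a : 'M[C]_n).

Lemma pidpid a b : (a <= b)%N -> (b <= n)%N ->
  pid a *m pid b = pid a /\ pid b *m pid a = pid a.
Proof.
move=> ab bn; rewrite !mul_pid_mx; split.
  by rewrite (minn_idPl ab) (minn_idPr (leq_trans ab bn)).
by rewrite (minn_idPr ab) (minn_idPr (leq_trans ab bn)).
Qed.

Lemma idem_sub m (v : 'M[C]_(m, n)) (A : 'M[C]_n) : A *m A = A ->
  (v <= A)%MS = (v *m A == v).
Proof.
move=> AA; apply/idP/idP.
  by case/submxP=> u ->; rewrite -mulmxA AA.
by move/eqP=> <-; apply: submxMl.
Qed.

Definition CanP a b : subsp n := block_mx (copid a) (pid b - pid a) 0 (pid a).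

Lemma CanP_sub a b (v w : 'rV[C]_n) :
  (row_mx v w <= CanP a b)%MS <->
  exists u1 u2 : 'rV[C]_n, v = u1 *m copid a /\ w = u1 *m (pid b - pid a) + u2 *m pid a.
Proof.
split.
  case/submxP=> u; rewrite -(hsubmxK u) mul_row_block mulmx0 addr0 => /eq_row_mx [-> ->].
  by exists (lsubmx u), (rsubmx u).
case=> u1 [u2 [-> ->]]; apply/submxP; exists (row_mx u1 u2).
by rewrite mul_row_block mulmx0 addr0.
Qed.

Variables (a b : nat) (ab : (a <= b)%N) (bn : (b <= n)%N).

Let an : (a <= n)%N. Proof. exact: leq_trans ab bn. Qed.
Let pa : pid a *m pid a = pid a. Proof. exact: pid_mx_id. Qed.
Let pb : pid b *m pid b = pid b. Proof. exact: pid_mx_id. Qed.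
Let pab : pid a *m pid b = pid a. Proof. by case: (pidpid ab bn). Qed.
Let pba : pid b *m pid a = pid a. Proof. by case: (pidpid ab bn). Qed.

Lemma copid_idem r : (r <= n)%N -> copid r *m copid r = copid r.
Proof. exact: copid_mx_id. Qed.

Lemma CanP_Dom (v : 'rV[C]_n) : (v <= DomM (CanP a b))%MS = (v <= copid a)%MS.
Proof.
apply/idP/idP.
  by case/DomM_spec=> w /CanP_sub [u1 [u2 [-> _]]]; apply: submxMl.
rewrite idem_sub ?copid_idem // => /eqP vE; apply/DomM_spec.
exists (v *m (pid b - pid a)); apply/CanP_sub; exists v, 0.
by rewrite vE mul0mx addr0.
Qed.

Lemma CanP_Im (w : 'rV[C]_n) : (w <= ImM (CanP a b))%MS = (w <= pid b)%MS.
Proof.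
apply/idP/idP.
  case/ImM_spec=> v /CanP_sub [u1 [u2 [_ ->]]].
  rewrite idem_sub //; apply/eqP.
  by rewrite mulmxDl -!mulmxA mulmxBl pb pab.
rewrite idem_sub // => /eqP wE; apply/ImM_spec.
exists (w *m copid a); apply/CanP_sub; exists w, w; split => //.
by rewrite -mulmxDr subrK wE.
Qed.

Lemma CanP_Ker (v : 'rV[C]_n) : (v <= KerM (CanP a b))%MS = (v <= copid b)%MS.
Proof.
rewrite KerM_spec idem_sub ?copid_idem //; apply/idP/idP.
  case/CanP_sub=> u1 [u2 [vE /esym wE]].
  have h1 : v *m pid b = - (u2 *m pid a).
    apply/eqP; rewrite -addr_eq0 -wE vE -!mulmxA /copid_mx !mulmxBl !mul1mx.
    by rewrite pab.
  have h2 : v *m pid a = 0.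
    by rewrite vE -mulmxA /copid_mx mulmxBl mul1mx pa subrr mulmx0.
  have h3 : v *m pid b = 0.
    have : v *m pid b *m pid a = - (u2 *m pid a) *m pid a by rewrite h1.
    by rewrite -mulmxA pba h2 mulNmx -mulmxA pa -h1 => /esym.
  by rewrite /copid_mx mulmxBr mulmx1 h3 subr0.
move/eqP=> vE.
have h3 : v *m pid b = 0.
  by rewrite -vE -mulmxA /copid_mx mulmxBl mul1mx pb subrr mulmx0.
have h2 : v *m pid a = 0 by rewrite -pba mulmxA h3 mul0mx.
apply/CanP_sub; exists v, 0; rewrite mul0mx addr0; split.
  by rewrite /copid_mx mulmxBr mulmx1 h2 subr0.
by rewrite mulmxBr h3 h2 subrr.
Qed.

Lemma CanP_Indef (w : 'rV[C]_n) : (w <= IndefM (CanP a b))%MS = (w <= pid a)%MS.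
Proof.
rewrite IndefM_spec idem_sub //; apply/idP/idP.
  case/CanP_sub=> u1 [u2 [/esym vE ->]].
  have h1 : u1 = u1 *m pid a.
    by apply/eqP; rewrite -subr_eq0 -vE /copid_mx mulmxBr mulmx1.
  rewrite h1 -mulmxA mulmxBr pab pa subrr mulmx0 add0r.
  by rewrite -mulmxA pa.
move/eqP=> wE; apply/CanP_sub; exists 0, w.
by rewrite !mul0mx add0r wE.
Qed.

Lemma CanP_rank : \rank (CanP a b) = n.
Proof.
rewrite rank_ImKer.
have -> : \rank (ImM (CanP a b)) = b.
  rewrite (@eqmx_rank _ _ _ _ _ (pid b)) ?rank_pid_mx //.
  by apply: eqmx_vec => v; rewrite CanP_Im.
have -> : \rank (KerM (CanP a b)) = (n - b)%N.
  rewrite (@eqmx_rank _ _ _ _ _ (copid b)) ?rank_copid_mx //.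
  by apply: eqmx_vec => v; rewrite CanP_Ker.
lia.
Qed.

Lemma CanP_rk : rk (CanP a b) = (b - a)%N.
Proof.
rewrite /rk.
rewrite (@eqmx_rank _ _ _ _ _ (copid a)); last by apply: eqmx_vec => v; rewrite CanP_Dom.
rewrite (@eqmx_rank _ _ _ _ (KerM (CanP a b)) (copid b)); last by apply: eqmx_vec => v; rewrite CanP_Ker.
rewrite !rank_copid_mx //; lia.
Qed.

End Can.


Definition ps (al : seq nat) j := sumn (take j al).

Lemma psS al j : (j < size al)%N -> ps al j.+1 = (ps al j + nth 0%N al j)%N.
Proof. by move=> js; rewrite /ps (take_nth 0%N js) sumn_rcons. Qed.

Lemma ps0 al : ps al 0 = 0%N.
Proof. by rewrite /ps take0. Qed.

Lemma ps_size al : ps al (size al) = sumn al.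
Proof. by rewrite /ps take_size. Qed.

Lemma ps_leS al j : (ps al j <= ps al j.+1)%N.
Proof.
case: (ltnP j (size al)) => js; first by rewrite psS //; lia.
by rewrite /ps !take_oversize //; lia.
Qed.

Lemma ps_mono al i j : (i <= j)%N -> (ps al i <= ps al j)%N.
Proof.
elim: j => [|j IH]; first by rewrite leqn0 => /eqP ->.
rewrite leq_eqVlt => /orP [/eqP -> //|]; rewrite ltnS => /IH h.
exact: leq_trans h (ps_leS al j).
Qed.

Lemma ps_le al j : (ps al j <= sumn al)%N.
Proof.
case: (ltnP j (size al)) => js.
  by rewrite -ps_size; apply: ps_mono; lia.
by rewrite /ps take_oversize.
Qed.

Definition Can n (al : seq nat) : seq (subsp n) :=
  [seq CanP n (ps al j) (ps al j.+1) | j <- iota 0 (size al)].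

Lemma size_Can n al : size (Can n al) = size al.
Proof. by rewrite size_map size_iota. Qed.

Lemma nth_Can n al j : (j < size al)%N ->
  nth 0 (Can n al) j = CanP n (ps al j) (ps al j.+1).
Proof. by move=> js; rewrite (nth_map 0%N) ?size_iota // nth_iota. Qed.

Lemma rk_Can n al : sumn al = n -> map (@rk n) (Can n al) = al.
Proof.
move=> sn; apply: (eq_from_nth (x0 := 0%N)); first by rewrite size_map size_Can.
move=> j; rewrite size_map size_Can => js.
have h1 := ps_leS al j; have h2 : (ps al j.+1 <= n)%N by rewrite -sn ps_le.
rewrite (nth_map 0) ?size_Can // nth_Can // CanP_rk // psS //; lia.
Qed.

Lemma Can_hinge n al : (0 < n)%N -> all (fun a => (0 < a)%N) al -> sumn al = n ->
  is_hinge (Can n al).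
Proof.
move=> n0 pos sn.
have al0 : al != [::] by apply/eqP => e; move: sn; rewrite e /=; lia.
have ple j : (ps al j <= n)%N by rewrite -sn ps_le.
split.
- by rewrite -size_eq0 size_Can size_eq0.
- move=> P /mapP [j]; rewrite mem_iota add0n => /andP [_ js] ->.
  split; first by rewrite CanP_rank ?ps_leS.
  rewrite CanP_rk ?ps_leS // psS //.
  have : (0 < nth 0%N al j)%N by apply: (all_nthP 0%N pos).
  lia.
- move=> j; rewrite size_Can => js.
  rewrite !nth_Can //; last by lia.
  split; apply: eqmx_vec => v.
    by rewrite CanP_Ker ?ps_leS // CanP_Dom ?ps_leS.
  by rewrite CanP_Im ?ps_leS // CanP_Indef ?ps_leS.
- rewrite -nth0 nth_Can; last by rewrite lt0n size_eq0.
  rewrite -sub1mx; apply: sub_vec => v _.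
  by rewrite CanP_Dom ?ps_leS // ps0 /copid_mx pid_mx_0 subr0 submx1.
- have sz : (0 < size al)%N by rewrite lt0n size_eq0.
  rewrite -nth_last size_Can nth_Can; last by lia.
  rewrite -sub1mx; apply: sub_vec => v _.
  rewrite CanP_Im ?ps_leS // prednK // ps_size sn.
  by rewrite pid_mx_1 submx1.
Qed.


Section Shift.
Variable n : nat.

Definition Sh (a r : nat) : 'M[C]_(n, r) := \matrix_(i, c) ((i : nat) == a + c)%N%:R.

Lemma pid_ShE m a r (i : 'I_n) (c : 'I_r) :
  ((pid_mx m : 'M[C]_n) *m Sh a r) i c = (((i : nat) == a + c) && (i < m))%N%:R.
Proof.
rewrite !mxE (bigD1 i) //= (@big1 C 0 +%R) ?addr0.
  rewrite /pid_mx /Sh !mxE eqxx /=; case: (i < m)%N; case: (_ == _);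
    by rewrite ?mul1r ?mul0r ?andbF.
move=> t /negbTE ti; rewrite /pid_mx !mxE.
by rewrite eq_sym -(inj_eq val_inj) in ti; rewrite /= ti mul0r.
Qed.

Lemma pid_Sh_full m a r : (a + r <= m)%N -> (pid_mx m : 'M[C]_n) *m Sh a r = Sh a r.
Proof.
move=> h; apply/matrixP => i c; rewrite pid_ShE mxE.
case: eqP => //= e; rewrite (_ : (i < m)%N = true) //; have := ltn_ord c; lia.
Qed.

Lemma pid_Sh_null m a r : (m <= a)%N -> (pid_mx m : 'M[C]_n) *m Sh a r = 0.
Proof.
move=> h; apply/matrixP => i c; rewrite pid_ShE mxE.
case: eqP => //= e; rewrite (_ : (i < m)%N = false) //; apply/negbTE; rewrite -leqNgt; lia.
Qed.

Lemma ShSh a r : (a + r <= n)%N ->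
  Sh a r *m (Sh a r)^T = (pid_mx (a + r) : 'M[C]_n) - pid_mx a.
Proof.
move=> arn; apply/matrixP => i i'; rewrite /pid_mx /Sh !mxE.
rewrite (eq_bigr (fun c : 'I_r => (((i : nat) == a + c)%N%:R * ((i' : nat) == a + c)%N%:R : C))); last by move=> c _; rewrite !mxE.
case: (boolP ((a <= i) && (i < a + r))%N) => hi.
  have cr : (i - a < r)%N by lia.
  rewrite (bigD1 (Ordinal cr)) //= (@big1 C 0 +%R) ?addr0.
    have E : (a + (i - a) = i)%N by lia.
    rewrite E eqxx mul1r (_ : (i < a + r)%N = true); last by lia.
    rewrite (_ : (i < a)%N = false); last by lia.
    by rewrite andbT andbF subr0 eq_sym.
  move=> c cne.
  case: (eqVneq (i : nat) (a + c)%N) => e; last by rewrite mul0r.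
  by move: cne; rewrite -val_eqE /= e addKn eqxx.
rewrite (@big1 C 0 +%R).
  case: (ltnP i a) => h.
    by rewrite (_ : (i < a + r)%N = true) ?h ?subrr //; apply: ltn_addr.
  have h2 : (a + r <= i)%N by move: hi; rewrite h /= -leqNgt.
  by rewrite ltnNge h2 /= !andbF subrr.
move=> c _.
case: (eqVneq (i : nat) (a + c)%N) => e; last by rewrite mul0r.
by move: hi; rewrite e leq_addr ltn_add2l ltn_ord.
Qed.

End Shift.


Section Classif.
Variable n : nat.
Variable H : seq (subsp n).
Hypothesis hH : is_hinge H.

Local Notation k := (size H).
Local Notation P j := (nth 0 H j).
Local Notation al := (map (@rk n) H).
Local Notation s j := (ps (map (@rk n) H) j).
Local Notation D j := (DomM (nth 0 H j)).
Local Notation K j := (KerM (nth 0 H j)).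
Local Notation M j := (ImM (nth 0 H j)).
Local Notation I j := (IndefM (nth 0 H j)).

Lemma k_gt0 : (0 < k)%N.
Proof. by case: hH; rewrite lt0n size_eq0. Qed.

Lemma hrank j : (j < k)%N -> \rank (P j) = n.
Proof. by move=> jk; case: hH => _ h _ _ _; case: (h _ (mem_nth 0 jk)). Qed.

Lemma hrk j : (j < k)%N -> (0 < rk (P j))%N.
Proof. by move=> jk; case: hH => _ h _ _ _; case: (h _ (mem_nth 0 jk)). Qed.

Lemma hnext j : (j.+1 < k)%N -> (K j == D j.+1)%MS /\ (M j == I j.+1)%MS.
Proof. by case: hH => _ _ h _ _; apply: h. Qed.

Lemma hfirst : \rank (D 0) = n.
Proof. by case: hH => _ _ _ h _; rewrite nth0; apply/eqP. Qed.

Lemma hlast : \rank (M k.-1) = n.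
Proof. by case: hH => _ _ _ _ h; rewrite nth_last; apply/eqP. Qed.

Lemma al_nth j : (j < k)%N -> nth 0%N al j = rk (P j).
Proof. by move=> jk; rewrite (nth_map 0). Qed.

Lemma sS j : (j < k)%N -> s j.+1 = (s j + rk (P j))%N.
Proof. by move=> jk; rewrite psS ?size_map // al_nth. Qed.

Lemma rankKD j : (\rank (K j) <= \rank (D j))%N.
Proof. exact/mxrankS/KerM_DomM. Qed.

Lemma Kzero : K k.-1 = 0.
Proof.
apply/eqP; rewrite -mxrank_eq0; apply/eqP.
have := rank_ImKer (P k.-1); rewrite hrank ?hlast; last by have := k_gt0; lia.
lia.
Qed.

Lemma rankD j : (j < k)%N -> (\rank (D j) + s j)%N = n.
Proof.
elim: j => [|j IH] jk; first by rewrite ps0 hfirst addn0.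
have jk' : (j < k)%N by lia.
have := IH jk'; rewrite sS //.
rewrite -(eqmx_rank (proj1 (hnext jk))) /rk.
have := rankKD j; lia.
Qed.

Lemma sum_al : sumn al = n.
Proof.
have k0 := k_gt0.
have e1 : (\rank (D k.-1) + s k.-1)%N = n by apply: rankD; lia.
have e2 : s k = (s k.-1 + rk (P k.-1))%N by rewrite -sS; [rewrite prednK | lia].
have e3 : s k = sumn al by rewrite -(size_map (@rk n) H) ps_size.
have e4 : rk (P k.-1) = \rank (D k.-1) by rewrite /rk Kzero mxrank0 subn0.
lia.
Qed.

Lemma s_k : s k = n.
Proof. by rewrite -(size_map (@rk n) H) ps_size sum_al. Qed.

Lemma s_le j : (s j <= n)%N.
Proof. by have := ps_le al j; rewrite sum_al. Qed.

Lemma s_mono i j : (i <= j)%N -> (s i <= s j)%N.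
Proof. exact: ps_mono. Qed.

Lemma Dchain i j : (i <= j)%N -> (j < k)%N -> (D j <= D i)%MS.
Proof.
move=> ij jk; elim: j ij jk => [|j IH]; first by rewrite leqn0 => /eqP ->.
rewrite leq_eqVlt => /orP [/eqP -> //|]; rewrite ltnS => ij jk.
apply: submx_trans (IH ij (ltnW jk)).
rewrite -(eqmxP (proj1 (hnext jk))).
exact: KerM_DomM.
Qed.

Lemma Ichain l j : (l < j)%N -> (j < k)%N -> (M l <= I j)%MS.
Proof.
move=> lj jk; elim: j lj jk => [|j IH] //.
rewrite ltnS leq_eqVlt => /orP [/eqP -> jk|lj jk].
  by rewrite (eqmxP (proj2 (hnext jk))).
apply: submx_trans (IH lj (ltnW jk)) _.
rewrite -(eqmxP (proj2 (hnext jk))).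
exact: IndefM_ImM.
Qed.


Local Notation pid a := (pid_mx a : 'M[C]_n).
Local Notation copid a := (copid_mx a : 'M[C]_n).

Definition W j := (D j :\: K j)%MS.

Lemma rankW j : \rank (W j) = rk (P j).
Proof.
have := mxrank_cap_compl (D j) (K j).
rewrite (eqmx_rank (introT eqmxP (capmx_idPr (KerM_DomM (P j))))) /rk /W.
have := rankKD j; lia.
Qed.

Definition B j : 'M[C]_n := Sh n (s j) (\rank (W j)) *m row_base (W j).
Definition Y j : 'M[C]_n := B j *m pinvmx (D j) *m rsubmx (P j).
Definition g1 : 'M[C]_n := \sum_(0 <= j < k) B j.
Definition g2 : 'M[C]_n := \sum_(0 <= j < k) Y j.
Definition mask j : 'M[C]_n := pid (s j.+1) - pid (s j).

Lemma pid_le a b : (a <= b)%N -> (b <= n)%N ->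
  pid a *m pid b = pid a /\ pid b *m pid a = pid a.
Proof. exact: pidpid. Qed.

Lemma mask_Sh j l : (j < k)%N -> (l < k)%N ->
  mask j *m Sh n (s l) (\rank (W l)) = if j == l then Sh n (s l) (\rank (W l)) else 0.
Proof.
move=> jk lk; rewrite /mask mulmxBl rankW.
have hl := sS lk; have hj := sS jk.
case: (ltngtP j l) => jl.
- have h1 : (s j.+1 <= s l)%N by apply: s_mono.
  have h2 : (s j <= s l)%N by apply: s_mono; lia.
  by rewrite !pid_Sh_null // subrr.
- have h1 : (s l + rk (P l) <= s j)%N by rewrite -hl; apply: s_mono.
  have h2 : (s l + rk (P l) <= s j.+1)%N by rewrite -hl; apply: s_mono; lia.
  by rewrite !pid_Sh_full // subrr.
- rewrite jl pid_Sh_full ?pid_Sh_null ?subr0 //.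
  by rewrite -hl.
Qed.

Lemma mask_B j l : (j < k)%N -> (l < k)%N -> mask j *m B l = if j == l then B l else 0.
Proof. by move=> jk lk; rewrite /B mulmxA mask_Sh //; case: eqP => // _; rewrite mul0mx. Qed.

Lemma mask_Y j l : (j < k)%N -> (l < k)%N -> mask j *m Y l = if j == l then Y l else 0.
Proof. by move=> jk lk; rewrite /Y (mulmxA (mask j)) (mulmxA (mask j)) mask_B //; case: eqP => // _; rewrite !mul0mx. Qed.
Lemma sum_delta (F : nat -> 'M[C]_n) j : (j < k)%N ->
  (forall l, (l < k)%N -> F l = if j == l then F j else 0) ->
  \sum_(0 <= l < k) F l = F j.
Proof.
move=> jk hF; rewrite (bigD1_seq j) ?mem_index_iota ?iota_uniq //=.
rewrite (@big1_seq 'M[C]_n 0 +%R) ?addr0 // => l /andP [lj]; rewrite mem_index_iota => /andP [_ lk].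
by rewrite hF // eq_sym (negbTE lj).
Qed.

Lemma mask_g1 j : (j < k)%N -> mask j *m g1 = B j.
Proof.
move=> jk; rewrite /g1 mulmx_sumr.
rewrite (@sum_delta (fun l => mask j *m B l) j jk) ?mask_B ?eqxx // => l lk.
by rewrite !mask_B //; case: eqP => // ->.
Qed.

Lemma mask_g2 j : (j < k)%N -> mask j *m g2 = Y j.
Proof.
move=> jk; rewrite /g2 mulmx_sumr.
rewrite (@sum_delta (fun l => mask j *m Y l) j jk) ?mask_Y ?eqxx // => l lk.
by rewrite !mask_Y //; case: eqP => // ->.
Qed.

Lemma pid_sum j : pid (s j) = \sum_(0 <= l < j) mask l.
Proof.
rewrite /mask (telescope_sumr (fun l => pid (s l))) //.
by rewrite ps0 pid_mx_0 subr0.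
Qed.

Lemma copid_sum j : (j <= k)%N -> copid (s j) = \sum_(j <= l < k) mask l.
Proof.
move=> jk; rewrite /mask (telescope_sumr (fun l => pid (s l))) //.
by rewrite s_k pid_mx_1.
Qed.

Lemma B_sub j : (B j <= D j)%MS.
Proof.
apply: submx_trans (submxMl _ _) _.
rewrite (eq_row_base (W j)); exact: diffmxSl.
Qed.

Lemma Y_sub j : (Y j <= M j)%MS.
Proof. exact: submxMl. Qed.

Lemma BY_sub j : (row_mx (B j) (Y j) <= P j)%MS.
Proof.
rewrite /Y -{1}(mulmxKpV (B_sub j)) -mul_mx_row.
rewrite (_ : row_mx (D j) (rsubmx (P j)) = P j) ?submxMl //.
exact: hsubmxK.
Qed.

Lemma copid_g1 j : (j < k)%N -> (copid (s j) *m g1 <= D j)%MS.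
Proof.
move=> jk; rewrite copid_sum ?(ltnW jk) // mulmx_suml big_nat_cond.
apply: summx_sub => l /andP [/andP [jl lk] _].
by rewrite mask_g1 //; apply: submx_trans (B_sub l) (Dchain jl lk).
Qed.

Lemma copid_n : copid (s k) = 0.
Proof. by rewrite s_k /copid_mx pid_mx_1 subrr. Qed.

Lemma copid_g1_K j : (j < k)%N -> (copid (s j.+1) *m g1 <= K j)%MS.
Proof.
move=> jk; case: (ltnP j.+1 k) => jk'.
  by rewrite (eqmxP (proj1 (hnext jk'))); apply: copid_g1.
have -> : j.+1 = k by lia.
by rewrite copid_n mul0mx sub0mx.
Qed.

Lemma pid_g2 j : (j < k)%N -> (pid (s j) *m g2 <= I j)%MS.
Proof.
move=> jk; rewrite pid_sum mulmx_suml big_nat_cond.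
apply: summx_sub => l /andP [/andP [_ lj] _].
rewrite mask_g2; last by lia.
exact: submx_trans (Y_sub l) (Ichain lj jk).
Qed.

Lemma mask_idem j : (j < k)%N -> mask j *m mask j = mask j.
Proof.
move=> jk; have h1 : (s j <= s j.+1)%N by apply: s_mono.
have [pab pba] := pid_le h1 (s_le _).
rewrite /mask mulmxBl !mulmxBr pab pba !pid_mx_id ?s_le //.
by rewrite subrr subr0.
Qed.

Lemma R2 j (y : 'rV[C]_n) : (j < k)%N -> y *m mask j = y ->
  (y *m g1 <= K j)%MS -> y = 0.
Proof.
move=> jk ym yK.
have e1 : y *m g1 = y *m Sh n (s j) (\rank (W j)) *m row_base (W j).
  by rewrite -{1}ym -mulmxA mask_g1 // /B mulmxA.
have hW : (y *m g1 <= W j)%MS.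
  by rewrite e1; apply: submx_trans (submxMl _ _) _; rewrite (eq_row_base (W j)).
have : (y *m g1 <= (W j :&: K j))%MS by rewrite sub_capmx hW yK.
rewrite /W capmx_diff submx0 e1 mulmx_free_eq0 ?row_base_free // => /eqP y0.
have hs : (s j + \rank (W j))%N = s j.+1 by rewrite rankW sS.
by rewrite -ym /mask -hs -ShSh ?hs ?s_le // mulmxA y0 mul0mx.
Qed.

Lemma pid_mask j : pid (s j) + mask j = pid (s j.+1).
Proof. by rewrite /mask addrC subrK. Qed.

Lemma mask_copid j : mask j + copid (s j.+1) = copid (s j).
Proof. by rewrite /mask /copid_mx addrC addrA subrK. Qed.

Lemma g1_unit : g1 \in unitmx.
Proof.
rewrite -row_free_unit; apply: inj_row_free => x xg.
have claim : forall j, (j <= k)%N -> x *m pid (s j) = 0.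
  elim=> [|j IH] jk; first by rewrite ps0 pid_mx_0 mulmx0.
  have jk' : (j < k)%N by lia.
  set y := x *m mask j.
  have ym : y *m mask j = y by rewrite /y -mulmxA mask_idem.
  have dec : x = x *m pid (s j) + y + x *m copid (s j.+1).
    by rewrite /y -!mulmxDr -addrA mask_copid /copid_mx addrC subrK mulmx1.
  have e : y *m g1 = - (x *m copid (s j.+1) *m g1).
    apply/eqP; rewrite -addr_eq0 -[X in _ == X]xg {2}dec !mulmxDl.
    by rewrite IH ?(ltnW jk) // mul0mx add0r.
  have y0 : y = 0.
    apply: (R2 jk' ym); rewrite e (eqmx_opp _) -mulmxA.
    exact: submx_trans (submxMl _ _) (copid_g1_K jk').
  by rewrite -pid_mask mulmxDr IH ?(ltnW jk) // add0r -/y y0.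
have := claim k (leqnn k); rewrite s_k pid_mx_1 mulmx1 //.
Qed.

Lemma g2_unit : g2 \in unitmx.
Proof.
rewrite -row_free_unit; apply: inj_row_free => x xg.
have claim : forall t, (t <= k)%N -> x *m copid (s (k - t)) = 0.
  elim=> [|t IH] tk; first by rewrite subn0 copid_n mulmx0.
  have jk : (k - t.+1 < k)%N by lia.
  have jS : (k - t.+1).+1 = (k - t)%N by lia.
  move: jk jS; set j := (k - t.+1)%N => jk jS.
  have IH' : x *m copid (s j.+1) = 0 by rewrite jS IH //; lia.
  set y := x *m mask j.
  have ym : y *m mask j = y by rewrite /y -mulmxA mask_idem.
  have dec : x = x *m pid (s j) + y.
    have : x = x *m pid (s j) + y + x *m copid (s j.+1).
      by rewrite /y -!mulmxDr -addrA mask_copid /copid_mx addrC subrK mulmx1.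
    by rewrite IH' addr0.
  have e : y *m g2 = - (x *m pid (s j) *m g2).
    apply/eqP; rewrite -addr_eq0 -mulmxDl addrC -dec; exact/eqP.
  have hI : (y *m g2 <= I j)%MS.
    rewrite e (eqmx_opp _) -mulmxA.
    exact: submx_trans (submxMl _ _) (pid_g2 jk).
  have h1 : (row_mx 0 (y *m g2) <= P j)%MS by rewrite -IndefM_sub.
  have h2 : (row_mx (y *m g1) (y *m g2) <= P j)%MS.
    have -> : row_mx (y *m g1) (y *m g2) = y *m row_mx (B j) (Y j).
      by rewrite mul_mx_row -mask_g1 // -mask_g2 // !mulmxA ym.
    exact: submx_trans (submxMl _ _) (BY_sub j).
  have h3 : (row_mx (y *m g1) 0 <= P j)%MS.
    have -> : row_mx (y *m g1) 0 = row_mx (y *m g1) (y *m g2) + - row_mx 0 (y *m g2).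
      by rewrite opp_row_mx add_row_mx oppr0 addr0 subrr.
    by apply: addmx_sub h2 _; rewrite (eqmx_opp _).
  have y0 : y = 0 by apply: (R2 jk ym); rewrite KerM_sub.
  by rewrite -mask_copid mulmxDr IH' addr0 -/y y0.
have := claim k (leqnn k); rewrite subnn ps0 /copid_mx pid_mx_0 subr0 mulmx1 //.
Qed.

Lemma act_eq j : (j < k)%N -> (act g1 g2 (CanP n (s j) (s j.+1)) == P j)%MS.
Proof.
move=> jk.
have h1 : (s j <= s j.+1)%N by apply: s_mono.
have sub : (act g1 g2 (CanP n (s j) (s j.+1)) <= P j)%MS.
  rewrite /act /CanP mulmx_block !mulmx0 !mul0mx !addr0 !add0r.
  rewrite /block_mx col_mx_sub; apply/andP; split.
    rewrite -mask_copid mulmxDl mask_g1 // mask_g2 //.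
    rewrite -[Y j]addr0 -add_row_mx; apply: addmx_sub (BY_sub j) _.
    by rewrite -KerM_sub copid_g1_K.
  by rewrite -IndefM_sub pid_g2.
have [_ e] := mxrank_leqif_sup sub.
rewrite rank_act ?g1_unit ?g2_unit // CanP_rank ?s_le // hrank // eqxx in e.
by apply/andP; split; rewrite // -e.
Qed.

Lemma classif : same_orbit (Can n al) H.
Proof.
exists g1, g2; split; rewrite ?g1_unit ?g2_unit ?size_Can ?size_map //.
by move=> j jk; rewrite nth_Can ?size_map // act_eq.
Qed.

End Classif.


Section Orbit.
Variable n : nat.

Lemma same_orbit_rk (H1 H2 : seq (subsp n)) :
  same_orbit H1 H2 -> map (@rk n) H1 = map (@rk n) H2.
Proof.
case=> g1 [g2 [u1 u2 sz hj]].
apply: (eq_from_nth (x0 := 0%N)); first by rewrite !size_map.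
move=> j; rewrite size_map => jk.
rewrite !(nth_map 0) -?sz // -(rk_eq (hj j jk)) rk_act //.
Qed.

Lemma act_eqmx g1 g2 (A B : subsp n) : (A == B)%MS -> (act g1 g2 A == act g1 g2 B)%MS.
Proof. by move/eqmxP=> e; apply/eqmxP; apply: eqmxMr. Qed.

Lemma same_orbit_sym (H1 H2 : seq (subsp n)) : same_orbit H1 H2 -> same_orbit H2 H1.
Proof.
case=> g1 [g2 [u1 u2 sz hj]].
exists (invmx g1), (invmx g2); split; [by rewrite unitmx_inv | by rewrite unitmx_inv | by [] |].
move=> j; rewrite -sz => jk.
have := act_eqmx (invmx g1) (invmx g2) (hj j jk).
by rewrite act_comp !mulmxV // act1 => /andP [h1 h2]; apply/andP; split.
Qed.

Lemma same_orbit_trans (H1 H2 H3 : seq (subsp n)) :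
  same_orbit H1 H2 -> same_orbit H2 H3 -> same_orbit H1 H3.
Proof.
case=> g1 [g2 [u1 u2 sz hj]]; case=> h1 [h2 [v1 v2 sz' hj']].
exists (g1 *m h1), (g2 *m h2); split; [by rewrite unitmx_mul u1 v1 | by rewrite unitmx_mul u2 v2 | by rewrite sz |].
move=> j jk; rewrite -act_comp.
have jk2 : (j < size H2)%N by rewrite -sz.
apply/eqmxP; apply: eqmx_trans (eqmxP (act_eqmx h1 h2 (hj j jk))) (eqmxP (hj' j jk2)).
Qed.

End Orbit.

Definition incr_head (c : seq nat) := if c is a :: t then a.+1 :: t else [::].

Fixpoint cmp (m : nat) : seq (seq nat) :=
  match m with
  | 0 => [:: [:: 1%N]]
  | m'.+1 => [seq 1%N :: c | c <- cmp m'] ++ [seq incr_head c | c <- cmp m']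
  end.

Lemma size_cmp m : size (cmp m) = (2 ^ m)%N.
Proof. by elim: m => //= m IH; rewrite size_cat !size_map IH expnS; lia. Qed.

Lemma cmp_prop m c : c \in cmp m ->
  [/\ all (fun a => (0 < a)%N) c, sumn c = m.+1 & c != [::]].
Proof.
elim: m c => [|m IH] c /=; first by rewrite inE => /eqP ->.
rewrite mem_cat => /orP [/mapP [d /IH [h1 h2 h3] ->]|/mapP [d /IH [h1 h2 h3] ->]].
  by rewrite /= h1 h2.
case: d h1 h2 h3 => [|a t] //= /andP [a0 ht] h2 _.
rewrite ht; split => //; lia.
Qed.

Lemma pos_sum0 t : all (fun a => (0 < a)%N) t -> sumn t = 0%N -> t = [::].
Proof. by case: t => //= a t /andP [a0 _]; lia. Qed.

Lemma cmp_all m c : all (fun a => (0 < a)%N) c -> sumn c = m.+1 -> c \in cmp m.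
Proof.
elim: m c => [|m IH] [|a t] //= /andP [a0 ht] sc.
  have a1 : a = 1%N by lia.
  by rewrite a1 (pos_sum0 ht) ?inE //; lia.
rewrite mem_cat; apply/orP.
case: (eqVneq a 1%N) => [a1|a1].
  left; apply/mapP; exists t; last by rewrite a1.
  by apply: IH => //; lia.
right; apply/mapP; exists (a.-1 :: t).
  by apply: IH; rewrite /= ?ht ?andbT; lia.
by rewrite /= prednK.
Qed.

Lemma cmp_uniq m : uniq (cmp m).
Proof.
elim: m => //= m IH; rewrite cat_uniq; apply/and3P; split.
- by rewrite map_inj_uniq // => c d [].
- apply/hasPn => c /mapP [d dm ->]; apply/negP => /mapP [e _].
  case: d dm => [/cmp_prop [_ _] //|a t /cmp_prop [/= /andP [a0 _] _ _] [] ?].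
  lia.
- rewrite map_inj_in_uniq // => c d /cmp_prop [_ _ c0] /cmp_prop [_ _ d0].
  by case: c c0 => // a t _; case: d d0 => // b u _ /= [-> ->].
Qed.


Theorem lemma2p3 (n : nat) (n_gt0 : (0 < n)%N) :
  (exists L : seq (seq (subsp n)),
     [/\ size L = (2 ^ (n - 1))%N,
         (forall H, H \in L -> is_hinge H) &
         (forall H, is_hinge H ->
            exists! i : nat, (i < size L)%N /\ same_orbit (nth [::] L i) H)]) /\
  (forall H1 H2 : seq (subsp n), is_hinge H1 -> is_hinge H2 ->
     (same_orbit H1 H2 <-> map (@rk n) H1 = map (@rk n) H2)) /\
  (forall alpha : seq nat, all (fun a => (0 < a)%N) alpha -> sumn alpha = n ->
     exists H : seq (subsp n), is_hinge H /\ map (@rk n) H = alpha).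
Proof.
have rk_pos : forall H : seq (subsp n), is_hinge H -> all (fun a => (0 < a)%N) (map (@rk n) H).
  move=> H hH; apply/allP => a /mapP [P PH ->].
  by case: hH => _ h _ _ _; case: (h P PH).
split; last split.
- case: n n_gt0 rk_pos => // n' _ rk_pos.
  exists (map (Can n'.+1) (cmp n')); split.
  + by rewrite size_map size_cmp subn1.
  + move=> H /mapP [c /cmp_prop [h1 h2 _] ->].
    exact: Can_hinge.
  + move=> H hH.
    have inc : map (@rk n'.+1) H \in cmp n'.
      by apply: cmp_all; [exact: rk_pos | exact: sum_al].
    exists (index (map (@rk n'.+1) H) (cmp n')); split.
      split; first by rewrite size_map index_mem.
      rewrite (nth_map [::]) ?index_mem // nth_index //.
      exact: classif.
    move=> i [ilt so].
    rewrite size_map in ilt.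
    move: so; rewrite (nth_map [::]) // => so.
    have [h1 h2 _] := cmp_prop (mem_nth [::] ilt).
    have := same_orbit_rk so; rewrite rk_Can // => e.
    by rewrite -e index_uniq // cmp_uniq.
- move=> H1 H2 h1 h2; split; first exact: same_orbit_rk.
  move=> e.
  apply: same_orbit_trans (same_orbit_sym (classif h1)) _.
  rewrite e; exact: classif.
- move=> alpha pos sn; exists (Can n alpha); split.
    exact: Can_hinge.
  exact: rk_Can.
Qed.
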